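(* Let $(R,\mathcal{T})$ and $(S,\widetilde{\mathcal{T}})$ be transverse étale equivalence relations on a compact, metrizable, zero-dimensional space $X$. Transfer the topology of $R\times_XS$ to $R\vee S$ via the bijection $r\times s:R\times_XS\to R\vee S$, $((x,y),(y,z))\mapsto(x,z)$, and call the resulting topology $\mathcal{W}$. Then $(R\vee S,\mathcal{W})$ is an étale equivalence relation on $X$; if $R$ and $S$ are CEERs, then $(R\vee S,\mathcal{W})$ is a CEER. Moreover, $\mathcal{W}$ is the unique étale topology on $R\vee S$ whose relative topologies on $R$ and $S$ are $\mathcal{T}$ and $\widetilde{\mathcal{T}}$ respectively, and $R$ and $S$ are both open subsets of $(R\vee S,\mathcal{W})$.
   Context: An étale equivalence relation on $X$ is a countable equivalence relation $R\subset X\times X$ with a locally compact, Hausdorff, second countable topology in which the product $(x,y)\cdot(y,z)=(x,z)$ of composable pairs is continuous (relative topology from $R\times R$), the inverse $(x,y)\mapsto(y,x)$ is a homeomorphism, and the range map $r(x,y)=x$ is a local homeomorphism $R\to X$. A CEER is a compact étale equivalence relation. $R\vee S$ is the equivalence relation generated by $R$ and $S$. $R\times_XS=\{((x,y),(y,z)):(x,y)\in R,(y,z)\in S\}$ with the relative topology from $R\times S$, with $r((x,y),(y,z))=x$, $s((x,y),(y,z))=z$. $R$ and $S$ are transverse if $R\cap S=\Delta_X$ and there is a homeomorphism $h:R\times_XS\to S\times_XR$ with $r\circ h=r$, $s\circ h=s$; for transverse $R,S$ the map $r\times s:R\times_XS\to R\vee S$ is a bijection. *)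

(* Defs.v *)
From mathcomp Require Import all_boot all_algebra.
From mathcomp Require Import all_classical all_reals all_analysis.
From mathcomp Require Import Rstruct Rstruct_topology.
Set Implicit Arguments. Unset Strict Implicit. Unset Printing Implicit Defensive.
Import Num.Theory.
Local Open Scope classical_set_scope.
Local Open Scope ring_scope.

Definition metrizable (X : topologicalType) : Prop :=
  exists d : X -> X -> Rdefinitions.R,
    [/\ (forall x y, d x y = 0 <-> x = y),
        (forall x y, d x y = d y x),
        (forall x y z, d x z <= d x y + d y z) &
        (forall U : set X,
            open U <-> (forall x, U x -> exists2 e : Rdefinitions.R, 0 < e &
                                  [set y | d x y < e] `<=` U))].

Definition zero_dim (X : topologicalType) : Prop :=
  forall (U : set X) (x : X), open U -> U x ->
    exists V : set X, [/\ clopen V, V x & V `<=` U].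

(* A small set-based general topology: a topology on a subset A of a   *)
(* type T is given by its family O of open sets (all contained in A).  *)
(* This lets us consider several topologies on the same set.           *)
Section GenTop.
Context {T : Type}.

Definition is_topology (A : set T) (O : set (set T)) : Prop :=
  [/\ (forall U, O U -> U `<=` A), O set0, O A,
      (forall F : set (set T), F `<=` O -> O (\bigcup_(U in F) U)) &
      (forall U V, O U -> O V -> O (U `&` V))].

Definition subspace_top (O : set (set T)) (B : set T) : set (set T) :=
  [set U | exists2 V, O V & U = V `&` B].

Definition hausdorff_on (A : set T) (O : set (set T)) : Prop :=
  forall x y, A x -> A y -> x <> y ->
    exists U V, [/\ O U, O V, U x, V y & U `&` V = set0].

Definition compact_in (A : set T) (O : set (set T)) (K : set T) : Prop :=
  K `<=` A /\
  forall F : set (set T), F `<=` O -> K `<=` \bigcup_(U in F) U ->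
    exists2 G : set (set T), finite_set G /\ G `<=` F & K `<=` \bigcup_(U in G) U.

Definition locally_compact_on (A : set T) (O : set (set T)) : Prop :=
  forall x, A x -> exists U K, [/\ O U, U x, U `<=` K & compact_in A O K].

Definition second_countable_on (O : set (set T)) : Prop :=
  exists B : set (set T), [/\ countable B, B `<=` O &
    forall U x, O U -> U x -> exists2 V, B V & V x /\ V `<=` U].

End GenTop.

Section Cont.
Context {T1 T2 : Type}.
Definition continuous_on (A : set T1) (OA : set (set T1))
    (B : set T2) (OB : set (set T2)) (f : T1 -> T2) : Prop :=
  (forall x, A x -> B (f x)) /\
  (forall V, OB V -> OA (A `&` f @^-1` V)).

End Cont.

Section Maps.
Context {T1 T2 : Type}.

Definition prod_top (O1 : set (set T1)) (O2 : set (set T2)) : set (set (T1 * T2)) :=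
  [set W | forall p, W p -> exists U V,
      [/\ O1 U, O2 V, U p.1, V p.2 & [set q | U q.1 /\ V q.2] `<=` W]].

Definition homeo_on (A : set T1) (OA : set (set T1))
    (B : set T2) (OB : set (set T2)) (f : T1 -> T2) : Prop :=
  continuous_on A OA B OB f /\
  exists g : T2 -> T1, [/\ continuous_on B OB A OA g,
      (forall x, A x -> g (f x) = x) & (forall y, B y -> f (g y) = y)].

Definition local_homeo_on (A : set T1) (OA : set (set T1))
    (B : set T2) (OB : set (set T2)) (f : T1 -> T2) : Prop :=
  (forall x, A x -> B (f x)) /\
  forall x, A x -> exists U, [/\ OA U, U x, OB (f @` U) &
      homeo_on U (subspace_top OA U) (f @` U) (subspace_top OB (f @` U)) f].

End Maps.

Section Etale.
Context {X : topologicalType}.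

Definition equivalence_rel (R : set (X * X)) : Prop :=
  [/\ (forall x, R (x, x)), (forall x y, R (x, y) -> R (y, x)) &
      (forall x y z, R (x, y) -> R (y, z) -> R (x, z))].

Definition join_rel (R S : set (X * X)) : set (X * X) :=
  [set p | forall E, equivalence_rel E -> R `<=` E -> S `<=` E -> E p].

Definition fibprod (R S : set (X * X)) : set ((X * X) * (X * X)) :=
  [set pq | [/\ R pq.1, S pq.2 & pq.1.2 = pq.2.1]].

Definition fibprod_top (R : set (X * X)) (OR : set (set (X * X)))
    (S : set (X * X)) (OS : set (set (X * X))) : set (set ((X * X) * (X * X))) :=
  subspace_top (prod_top OR OS) (fibprod R S).

Definition rng2 (pq : (X * X) * (X * X)) : X := pq.1.1.
Definition src2 (pq : (X * X) * (X * X)) : X := pq.2.2.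
Definition rs_map (pq : (X * X) * (X * X)) : X * X := (pq.1.1, pq.2.2).

Definition open_X : set (set X) := [set U | open U].

Definition etale_eq_rel (R : set (X * X)) (OR : set (set (X * X))) : Prop :=
  [/\ equivalence_rel R /\ (forall x, countable [set y | R (x, y)]),
      is_topology R OR /\
      [/\ hausdorff_on R OR, locally_compact_on R OR & second_countable_on OR],
      continuous_on (fibprod R R) (fibprod_top R OR R OR) R OR rs_map,
      homeo_on R OR R OR (fun p => (p.2, p.1)) &
      local_homeo_on R OR setT open_X fst].

Definition CEER (R : set (X * X)) (OR : set (set (X * X))) : Prop :=
  etale_eq_rel R OR /\ compact_in R OR R.

Definition transverse (R : set (X * X)) (OR : set (set (X * X)))
    (S : set (X * X)) (OS : set (set (X * X))) : Prop :=
  R `&` S = [set p | p.1 = p.2] /\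
  exists h : (X * X) * (X * X) -> (X * X) * (X * X),
    [/\ homeo_on (fibprod R S) (fibprod_top R OR S OS)
                 (fibprod S R) (fibprod_top S OS R OR) h,
        (forall pq, fibprod R S pq -> rng2 (h pq) = rng2 pq) &
        (forall pq, fibprod R S pq -> src2 (h pq) = src2 pq)].

Definition join_top (R : set (X * X)) (OR : set (set (X * X)))
    (S : set (X * X)) (OS : set (set (X * X))) : set (set (X * X)) :=
  [set V | exists2 U, fibprod_top R OR S OS U & V = rs_map @` U].

End Etale.

(* Main.v *)
From HB Require Import structures.
Require Import Defs.
From mathcomp Require Import all_boot all_algebra.
From mathcomp Require Import all_classical all_reals all_analysis.
From mathcomp Require Import finmap.
Set Implicit Arguments. Unset Strict Implicit. Unset Printing Implicit Defensive.
Local Open Scope classical_set_scope.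


Definition pick {T : Type} (P : T -> Prop) (d : T) : T :=
  match pselect (exists x, P x) with
  | left e => projT1 (cid e)
  | right _ => d end.
Lemma pickP T (P : T -> Prop) d : (exists x, P x) -> P (pick P d).
Proof. rewrite /pick; case: pselect => [e _|n e]; [exact: projT2 (cid e)|by case: n]. Qed.

Section PX.
Variables (X : topologicalType) (x0 : X).
Definition pX : Type := X.
HB.instance Definition _ := Topological.on pX.
HB.instance Definition _ := isPointed.Build pX x0.
Lemma cc (A : set X) : compact A -> @cover_compact pX A.
Proof. move=> h; rewrite -compact_cover. exact: h. Qed.
End PX.

Section Gen.
Context {T : Type}.
Implicit Types (A B U V : set T) (O : set (set T)).

Lemma top_sub A O U : is_topology A O -> O U -> U `<=` A.
Proof. by case=> + _ _ _ _; apply. Qed.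
Lemma top_A A O : is_topology A O -> O A.
Proof. by case. Qed.
Lemma top_0 A O : is_topology A O -> O set0.
Proof. by case. Qed.
Lemma top_I A O U V : is_topology A O -> O U -> O V -> O (U `&` V).
Proof. by case=> _ _ _ _; apply. Qed.
Lemma top_bigcup A O (F : set (set T)) : is_topology A O -> F `<=` O -> O (\bigcup_(U in F) U).
Proof. by case=> _ _ _ + _; apply. Qed.

Lemma top_loc A O U : is_topology A O ->
  (forall x, U x -> exists2 V, O V & V x /\ V `<=` U) -> O U.
Proof.
move=> tO H.
have -> : U = \bigcup_(V in [set V | O V /\ V `<=` U]) V.
  apply/seteqP; split=> [x Ux|x [V [_ VU] Vx]]; last exact: VU.
  by have [V OV [Vx VU]] := H x Ux; exists V.
by apply: top_bigcup tO _ => V [].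
Qed.

Lemma top_subspace A O B : is_topology A O -> B `<=` A -> is_topology B (subspace_top O B).
Proof.
move=> tO BA; split.
- by move=> U [V _ ->] x [].
- by exists set0; [exact: top_0 tO|rewrite set0I].
- exists A; [exact: top_A tO|]; apply/seteqP; split=> x; [move=> Bx; split=> //; exact: BA|by case].
- move=> F FO; exists (\bigcup_(V in [set V | O V /\ F (V `&` B)]) V).
    by apply: top_bigcup tO _ => V [].
  apply/seteqP; split=> x.
  + move=> [U FU Ux]; have [V OV eU] := FO U FU.
    by move: (Ux); rewrite eU => -[Vx Bx]; split=> //; exists V => //; split=> //; rewrite -eU.
  + by move=> [[V [_ FV] Vx] Bx]; exists (V `&` B).
- move=> _ _ [U OU ->] [V OV ->]; exists (U `&` V); first exact: top_I tO OU OV.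
  by rewrite setIACA setIid.
Qed.

End Gen.

Lemma top_X (X : topologicalType) : is_topology [set: X] open_X.
Proof.
split=> //; [exact: open0|exact: openT| |].
- by move=> F FO; apply: bigcup_open.
- by move=> U V oU oV; exact: openI.
Qed.

Section Cont.
Context {T1 T2 : Type}.
Implicit Types (A U : set T1) (B V : set T2) (OA : set (set T1)) (OB : set (set T2)).

Lemma cont_img A OA B OB (f : T1 -> T2) : continuous_on A OA B OB f -> forall x, A x -> B (f x).
Proof. by case. Qed.
Lemma cont_pre A OA B OB (f : T1 -> T2) V : continuous_on A OA B OB f -> OB V -> OA (A `&` f @^-1` V).
Proof. by case=> _; apply. Qed.

Lemma cont_loc A OA B OB (f : T1 -> T2) : is_topology A OA ->
  (forall x, A x -> B (f x)) ->
  (forall x V, A x -> OB V -> V (f x) -> exists2 U, OA U & U x /\ (forall y, U y -> V (f y))) ->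
  continuous_on A OA B OB f.
Proof.
move=> tA AB H; split=> // V OV; apply: (top_loc tA) => x [Ax Vfx].
have [U OU [Ux UV]] := H x V Ax OV Vfx.
exists U => //; split=> // y Uy; split; [exact: (top_sub tA OU)|exact: UV].
Qed.

Lemma cont_ext A OA B OB (f g : T1 -> T2) : (forall x, A x -> f x = g x) ->
  continuous_on A OA B OB f -> continuous_on A OA B OB g.
Proof.
move=> fg [fAB fc]; split=> [x Ax|V OV]; first by rewrite -fg //; apply: fAB.
suff -> : A `&` g @^-1` V = A `&` f @^-1` V by apply: fc.
by apply/seteqP; split=> x [Ax]; rewrite /preimage /= ?fg // => ?; split.
Qed.

Lemma cont_dom_sub A OA B OB (f : T1 -> T2) U : continuous_on A OA B OB f -> U `<=` A ->
  continuous_on U (subspace_top OA U) B OB f.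
Proof.
move=> [fAB fc] UA; split=> [x Ux|V OV]; first exact/fAB/UA.
exists (A `&` f @^-1` V); first exact: fc.
apply/seteqP; split=> x; [move=> [Ux Vfx]; split=> //; split=> //; exact: UA|by move=> [[]]].
Qed.

Lemma cont_cod_sub A OA B OB (f : T1 -> T2) C : continuous_on A OA B OB f ->
  (forall x, A x -> C (f x)) -> continuous_on A OA C (subspace_top OB C) f.
Proof.
move=> [fAB fc] AC; split=> // V' [V OV ->].
suff -> : A `&` f @^-1` (V `&` C) = A `&` f @^-1` V by apply: fc.
apply/seteqP; split=> x /=; [by move=> [Ax []]|move=> [Ax Vx]; do !split=> //; exact: AC].
Qed.

Lemma cont_cod_weak A OA B OB (f : T1 -> T2) B' : continuous_on A OA B OB f ->
  (forall x, A x -> B' (f x)) -> continuous_on A OA B' OB f.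
Proof. by move=> [_ fc] AC; split. Qed.

End Cont.

Lemma cont_comp {T1 T2 T3 : Type} (A : set T1) OA (B : set T2) OB (C : set T3) OC
  (f : T1 -> T2) (g : T2 -> T3) :
  continuous_on A OA B OB f -> continuous_on B OB C OC g -> continuous_on A OA C OC (g \o f).
Proof.
move=> [fAB fc] [gBC gc]; split=> [x Ax|W OW]; first exact/gBC/fAB.
suff -> : A `&` (g \o f) @^-1` W = A `&` f @^-1` (B `&` g @^-1` W) by apply/fc/gc.
apply/seteqP; split=> x /= [Ax H]; split=> //; [split=> //; exact: fAB|by case: H].
Qed.

Lemma cont_id {T : Type} (A : set T) O : is_topology A O -> continuous_on A O A O id.
Proof.
move=> tO; split=> // V OV; suff -> : A `&` id @^-1` V = V by [].
by apply/seteqP; split=> [x []//|x Vx]; split=> //; exact: top_sub tO OV x Vx.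
Qed.

Notation box U V := [set q | U q.1 /\ V q.2].
Section Prod.
Context {T1 T2 : Type}.

Lemma prod_box (O1 : set (set T1)) (O2 : set (set T2)) U V : O1 U -> O2 V -> prod_top O1 O2 (box U V).
Proof. by move=> OU OV p [Up Vp]; exists U, V; split. Qed.

Lemma top_prod (A1 : set T1) O1 (A2 : set T2) O2 : is_topology A1 O1 -> is_topology A2 O2 ->
  is_topology (box A1 A2) (prod_top O1 O2).
Proof.
move=> t1 t2; split.
- move=> W OW p Wp; have [U [V [OU OV Up Vp _]]] := OW p Wp.
  by split; [exact: top_sub t1 OU _ Up|exact: top_sub t2 OV _ Vp].
- by move=> p.
- exact: prod_box (top_A t1) (top_A t2).
- move=> F FO p [W FW Wp]; have [U [V [OU OV Up Vp sW]]] := FO W FW p Wp.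
  by exists U, V; split=> // q Bq; exists W => //; exact: sW.
- move=> W1 W2 O1W O2W p [W1p W2p].
  have [U [V [OU OV Up Vp s1]]] := O1W p W1p.
  have [U' [V' [OU' OV' Up' Vp' s2]]] := O2W p W2p.
  exists (U `&` U'), (V `&` V'); split; [exact: top_I t1 OU OU'|exact: top_I t2 OV OV'|by []|by []|].
  by move=> q [[]?? []??]; split; [apply: s1|apply: s2].
Qed.

Lemma cont_pair {T0 : Type} (C : set T0) OC (A1 : set T1) O1 (A2 : set T2) O2 (P : set (T1 * T2))
    (f1 : T0 -> T1) (f2 : T0 -> T2) :
  is_topology C OC -> continuous_on C OC A1 O1 f1 -> continuous_on C OC A2 O2 f2 ->
  (forall x, C x -> P (f1 x, f2 x)) ->
  continuous_on C OC P (subspace_top (prod_top O1 O2) P) (fun x => (f1 x, f2 x)).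
Proof.
move=> tC c1 c2 CP; apply: cont_loc => // x V' Cx [W OW ->] [Wx _].
have [U [V [OU OV Ux Vx sUV]]] := OW _ Wx.
exists ((C `&` f1 @^-1` U) `&` (C `&` f2 @^-1` V)).
  by apply: (top_I tC); [exact: cont_pre c1 OU|exact: cont_pre c2 OV].
split; first by do !split.
by move=> y [[Cy U1] [_ V2]]; split; [exact: sUV|exact: CP].
Qed.

Lemma cont_pfst (A1 : set T1) O1 (A2 : set T2) O2 (P : set (T1 * T2)) : is_topology A2 O2 ->
  (forall p, P p -> A1 p.1 /\ A2 p.2) ->
  continuous_on P (subspace_top (prod_top O1 O2) P) A1 O1 fst.
Proof.
move=> t2 PA; split=> [p /PA []//|U OU].
exists (box U A2); first exact: prod_box (top_A t2).
apply/seteqP; split=> p /=; first by move=> [Pp Up]; do !split=> //; case: (PA p Pp).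
by move=> [[]].
Qed.

Lemma cont_psnd (A1 : set T1) O1 (A2 : set T2) O2 (P : set (T1 * T2)) : is_topology A1 O1 ->
  (forall p, P p -> A1 p.1 /\ A2 p.2) ->
  continuous_on P (subspace_top (prod_top O1 O2) P) A2 O2 snd.
Proof.
move=> t1 PA; split=> [p /PA []//|V OV].
exists (box A1 V); first exact: prod_box (top_A t1) OV.
apply/seteqP; split=> p /=; first by move=> [Pp Vp]; do !split=> //; case: (PA p Pp).
by move=> [[]].
Qed.

Lemma haus_prod (A1 : set T1) O1 (A2 : set T2) O2 (P : set (T1 * T2)) :
  (forall p, P p -> A1 p.1 /\ A2 p.2) -> is_topology A1 O1 -> is_topology A2 O2 ->
  hausdorff_on A1 O1 -> hausdorff_on A2 O2 ->
  hausdorff_on P (subspace_top (prod_top O1 O2) P).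
Proof.
move=> PA t1 t2 h1 h2 p q Pp Pq pq.
have [[A1p A2p] [A1q A2q]] := (PA p Pp, PA q Pq).
have [e1|n1] := pselect (p.1 = q.1).
- have n2 : p.2 <> q.2.
    by move=> e2; apply: pq; move: e1 e2; case: p {Pp A1p A2p} => ??; case: q {Pq A1q A2q} => ?? /= -> ->.
  have [U [V [OU OV Up Vq UV]]] := h2 _ _ A2p A2q n2.
  exists (box A1 U `&` P), (box A1 V `&` P); split.
  + by exists (box A1 U) => //; exact: prod_box (top_A t1) OU.
  + by exists (box A1 V) => //; exact: prod_box (top_A t1) OV.
  + by [].
  + by [].
  + apply/seteqP; split=> // r [[[_ Ur] _] [[_ Vr] _]].
    by have : (U `&` V) r.2 by []; rewrite UV.
- have [U [V [OU OV Up Vq UV]]] := h1 _ _ A1p A1q n1.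
  exists (box U A2 `&` P), (box V A2 `&` P); split.
  + by exists (box U A2) => //; exact: prod_box OU (top_A t2).
  + by exists (box V A2) => //; exact: prod_box OV (top_A t2).
  + by [].
  + by [].
  + apply/seteqP; split=> // r [[[Ur _] _] [[Vr _] _]].
    by have : (U `&` V) r.1 by []; rewrite UV.
Qed.

Lemma sc_prod (O1 : set (set T1)) (O2 : set (set T2)) (P : set (T1 * T2)) :
  second_countable_on O1 -> second_countable_on O2 ->
  second_countable_on (subspace_top (prod_top O1 O2) P).
Proof.
move=> [B1 [cB1 B1O b1]] [B2 [cB2 B2O b2]].
exists ((fun UV : set T1 * set T2 => box UV.1 UV.2 `&` P) @` (B1 `*` B2)); split.
- exact: (sub_countable (card_image_le _ _) (countableX cB1 cB2)).
- move=> _ [[U V] [/= BU BV] <-]; exists (box U V) => //; exact: prod_box (B1O _ BU) (B2O _ BV).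
- move=> _ x [W OW ->] [Wx Px].
  have [U [V [OU OV Ux Vx sW]]] := OW x Wx.
  have [U' BU' [U'x U'U]] := b1 U _ OU Ux.
  have [V' BV' [V'x V'V]] := b2 V _ OV Vx.
  exists (box U' V' `&` P); first by exists (U', V').
  split=> // y [[? ?] ?]; split=> //; apply: sW; split; [exact: U'U|exact: V'V].
Qed.

End Prod.


Definition img_top {T T' : Type} (f : T -> T') (O : set (set T)) : set (set T') :=
  [set V | exists2 U, O U & V = f @` U].

Section Img.
Context {T T' : Type} (A : set T) (O : set (set T)) (f : T -> T').
Hypotheses (tO : is_topology A O)
  (finj : forall x y, A x -> A y -> f x = f y -> x = y).

Lemma img_topE V : img_top f O V <-> V `<=` f @` A /\ O (A `&` f @^-1` V).
Proof.
split=> [[U OU ->]|[VA OV]].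
  split; first by move=> _ [u Uu <-]; exists u => //; exact: (top_sub tO OU).
  suff -> : A `&` f @^-1` (f @` U) = U by [].
  apply/seteqP; split=> [x [Ax [u Uu fu]]|x Ux]; last first.
    by split; [exact: (top_sub tO OU)|exists x].
  by rewrite -(finj (top_sub tO OU Uu) Ax fu).
exists (A `&` f @^-1` V) => //; apply/seteqP; split=> [y Vy|_ [x [Ax Vfx] <-]] //.
by have [x Ax fx] := VA _ Vy; exists x => //; split=> //; rewrite /preimage /= fx.
Qed.

Lemma top_img : is_topology (f @` A) (img_top f O).
Proof.
split.
- by move=> V /img_topE [].
- by exists set0; [exact: top_0 tO|rewrite image_set0].
- by exists A => //; exact: top_A tO.
- move=> F FO; exists (\bigcup_(U in [set U | O U /\ F (f @` U)]) U).
    by apply: top_bigcup tO _ => U [].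
  apply/seteqP; split=> y.
  + move=> [V FV Vy]; have [U OU eV] := FO V FV.
    by move: Vy; rewrite eV => -[u Uu <-]; exists u => //; exists U => //; split=> //; rewrite -eV.
  + by move=> [u [U [_ FU] Uu] <-]; exists (f @` U) => //; exists u.
- move=> V1 V2 /img_topE [s1 o1] /img_topE [s2 o2]; apply/img_topE; split.
    by move=> y [/s1].
  suff -> : A `&` f @^-1` (V1 `&` V2) = (A `&` f @^-1` V1) `&` (A `&` f @^-1` V2).
    exact: top_I tO o1 o2.
  by apply/seteqP; split=> x; [move=> [Ax [??]]|move=> [[Ax ?] [_ ?]]].
Qed.

Lemma cont_into {T0 : Type} (C : set T0) OC (g : T0 -> T) :
  continuous_on C OC A O g -> continuous_on C OC (f @` A) (img_top f O) (f \o g).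
Proof.
move=> [gA gc]; split=> [x Cx|V /img_topE [VA OV]]; first by exists (g x) => //; exact: gA.
suff -> : C `&` (f \o g) @^-1` V = C `&` g @^-1` (A `&` f @^-1` V) by apply: gc.
by apply/seteqP; split=> x [Cx H]; split=> //; [split=> //; exact: gA|case: H].
Qed.

Lemma cont_outof {T0 : Type} (D : set T0) OD (g : T' -> T0) :
  continuous_on A O D OD (g \o f) -> continuous_on (f @` A) (img_top f O) D OD g.
Proof.
move=> [gA gc]; split=> [_ [x Ax <-]|W OW]; first exact: gA.
apply/img_topE; split; first by move=> y [].
suff -> : A `&` f @^-1` (f @` A `&` g @^-1` W) = A `&` (g \o f) @^-1` W by apply: gc.
apply/seteqP; split=> x [Ax H]; split=> //; first by case: H.
Qed.

Lemma haus_img : hausdorff_on A O -> hausdorff_on (f @` A) (img_top f O).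
Proof.
move=> hA _ _ [x Ax <-] [y Ay <-] nfxy.
have nxy : x <> y by move=> exy; apply: nfxy; rewrite exy.
have [U [V [OU OV Ux Vy UV]]] := hA x y Ax Ay nxy.
exists (f @` U), (f @` V); split; [by exists U|by exists V|by exists x|by exists y|].
apply/seteqP; split=> // z [[u Uu fuz] [v Vv fvz]].
have e : v = u by apply: finj (top_sub tO OV Vv) (top_sub tO OU Uu) _; rewrite fvz fuz.
have : (U `&` V) u by split=> //; rewrite -e.
by rewrite UV.
Qed.

Lemma sc_img : second_countable_on O -> second_countable_on (img_top f O).
Proof.
move=> [B [cB BO bB]]; exists ((fun U => f @` U) @` B); split.
- exact: (sub_countable (card_image_le _ _) cB).
- by move=> _ [U BU <-]; exists U => //; exact: BO.
- move=> _ _ [U OU ->] [x Ux <-].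
  have [V BV [Vx VU]] := bB U x OU Ux.
  exists (f @` V); first by exists V.
  by split; [exists x|move=> _ [v Vv <-]; exists v => //; exact: VU].
Qed.

End Img.

Lemma compact_img {T T' : Type} (A : set T) O (B : set T') OB (f : T -> T') K :
  continuous_on A O B OB f -> compact_in A O K -> compact_in B OB (f @` K).
Proof.
move=> [fAB fc] [KA cK]; split; first by move=> _ [k Kk <-]; exact/fAB/KA.
move=> F FOB cov.
pose G := [set U | exists2 V, F V & U = A `&` f @^-1` V].
have [H [fH HG] KH] : exists2 H, finite_set H /\ H `<=` G & K `<=` \bigcup_(U in H) U.
  apply: cK.
  - by move=> U [V FV ->]; exact: fc (FOB V FV).
  - move=> k Kk; have [V FV Vfk] := cov (f k) (ex_intro2 _ _ k Kk erefl).
    by exists (A `&` f @^-1` V); [exists V|split=> //; exact: KA].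
pose ch U := pick (fun V => F V /\ U = A `&` f @^-1` V) set0.
have chP U : H U -> F (ch U) /\ U = A `&` f @^-1` (ch U).
  by move=> /HG [V FV eU]; apply: (@pickP _ (fun V => F V /\ U = A `&` f @^-1` V)); exists V.
exists (ch @` H); first by split; [exact: finite_image|move=> _ [U HU <-]; exact: (chP U HU).1].
move=> _ [k Kk <-]; have [U HU Uk] := KH k Kk.
exists (ch U); first by exists U.
by move: Uk; rewrite {1}(chP U HU).2 => -[].
Qed.

Section LH.
Context {T : Type} {X : topologicalType} (A : set T) (O : set (set T)) (f : T -> X).
Hypotheses (tO : is_topology A O) (fc : continuous_on A O setT open_X f)
  (fo : forall U, O U -> open (f @` U))
  (fi : forall a, A a -> exists2 U, O U &
          U a /\ (forall x y, U x -> U y -> f x = f y -> x = y)).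

Lemma lh_of : local_homeo_on A O setT open_X f.
Proof.
split=> // a Aa; have [U OU [Ua Uinj]] := fi Aa.
exists U; split=> //; first exact: fo.
split.
  apply: cont_cod_sub; first exact: cont_dom_sub fc (top_sub tO OU).
  by move=> x Ux; exists x.
pose g y := pick (fun x => U x /\ f x = y) a.
have gP y : (f @` U) y -> U (g y) /\ f (g y) = y.
  by move=> [x Ux fx]; apply: (@pickP _ (fun x => U x /\ f x = y)); exists x.
have gf x : U x -> g (f x) = x.
  by move=> Ux; have [] := gP (f x) (ex_intro2 _ _ x Ux erefl); move=> Ug fg; apply: Uinj.
exists g; split.
- split=> [y /gP [] //|V' [V OV ->]].
  exists (f @` (V `&` U)); first exact/fo/(top_I tO).
  apply/seteqP; split=> y.
  + move=> [fUy [Vgy Ugy]]; split=> //; exists (g y); [by split|exact: (gP _ fUy).2].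
  + move=> [[x [Vx Ux] <-] fUy]; split=> //; rewrite /preimage /= gf //.
- exact: gf.
- by move=> y /gP [].
Qed.

Lemma lc_of : compact [set: X] -> zero_dim X -> locally_compact_on A O.
Proof.
move=> cX zX a Aa; have [U OU [Ua Uinj]] := fi Aa.
have [C [[Co Ccl] Cfa CU]] := zX _ (f a) (fo OU) (ex_intro2 _ _ a Ua erefl).
pose K := U `&` (A `&` f @^-1` C).
have OK : O K by apply: top_I tO OU (cont_pre fc _).
have KA : K `<=` A by move=> x [Ux _]; exact: top_sub tO OU x Ux.
exists K, K; split.
- exact: OK.
- by split=> //; split.
- by [].
split=> // F FO KF.
have cC : compact C := subclosed_compact Ccl cX (@subsetT _ C).
have [] := @cc X (f a) C cC _ F (fun G => f @` (G `&` U)).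
- by move=> G FG; apply: fo; apply: top_I tO (FO _ FG) OU.
- move=> y Cy; have [x Ux fx] := CU y Cy.
  have Kx : K x by split=> //; split; [exact: top_sub tO OU _ Ux|rewrite /preimage/= fx].
  by have [G FG Gx] := KF x Kx; exists G => //; exists x.
move=> D' sD' cov; exists [set` D'].
  split; first exact: finite_fset.
  by move=> G GD; have := sD' G GD; rewrite in_setE.
move=> k [Uk [Ak Cfk]]; have [G GD [u [Gu Uu] fuk]] := cov _ Cfk.
by exists G => //; rewrite (Uinj _ _ Uk Uu (esym fuk)).
Qed.

End LH.


Definition swap {X : Type} (p : X * X) : X * X := (p.2, p.1).

Section Etale.
Context {X : topologicalType} (R : set (X * X)) (OR : set (set (X * X))).
Hypothesis eR : etale_eq_rel R OR.

Lemma et_eqv : Defs.equivalence_rel R. Proof. by case: eR => [[]]. Qed.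
Lemma et_refl x : R (x, x). Proof. by case: et_eqv. Qed.
Lemma et_sym x y : R (x, y) -> R (y, x). Proof. by case: et_eqv => _ + _; apply. Qed.
Lemma et_trans x y z : R (x, y) -> R (y, z) -> R (x, z).
Proof. by case: et_eqv => _ _; apply. Qed.
Lemma et_top : is_topology R OR. Proof. by case: eR => _ []. Qed.
Lemma et_haus : hausdorff_on R OR. Proof. by case: eR => _ [_ []]. Qed.
Lemma et_sc : second_countable_on OR. Proof. by case: eR => _ [_ []]. Qed.
Lemma et_mult : continuous_on (fibprod R R) (fibprod_top R OR R OR) R OR rs_map.
Proof. by case: eR. Qed.
Lemma et_lh : local_homeo_on R OR setT open_X fst. Proof. by case: eR. Qed.
Lemma et_swap_cont : continuous_on R OR R OR swap.
Proof. by case: eR => _ _ _ [] + _. Qed.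

Lemma et_fst_cont : continuous_on R OR setT open_X fst.
Proof.
apply: cont_loc et_top _ _ => // a V Ra OV Vfa.
have [_ lh] := et_lh; have [U [OU Ua _ [[_ c] _]]] := lh a Ra.
have : subspace_top open_X (fst @` U) ((fst @` U) `&` V) by exists V => //; rewrite setIC.
move=> /c [W OW e].
exists (W `&` U); first exact: top_I et_top OW OU.
split.
- have : (U `&` fst @^-1` (fst @` U `&` V)) a by split=> //; split=> //; exists a.
  by rewrite e.
- move=> b Wb; have : (U `&` fst @^-1` (fst @` U `&` V)) b by rewrite e.
  by case=> _ [].
Qed.

Lemma et_fst_open U : OR U -> open (fst @` U).
Proof.
move=> OU.
have -> : fst @` U = \bigcup_(V in [set V : set X | open V /\ V `<=` fst @` U]) V.
  apply/seteqP; split=> [_ [a Ua <-]|y [V [_ VU] Vy]]; last exact: VU.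
  have Ra := top_sub et_top OU Ua.
  have [_ lh] := et_lh; have [B [OB Ba oB [_ [g [[_ gc] gf fg]]]]] := lh a Ra.
  have : subspace_top OR B (U `&` B) by exists U.
  move=> /gc [V0 oV0 e].
  exists (V0 `&` fst @` B); [split; [exact: openI|] |].
  + move=> y Vy; have : (fst @` B `&` g @^-1` (U `&` B)) y by rewrite e.
    by move=> [fBy [Ugy Bgy]]; exists (g y) => //; exact: fg.
  + have : (fst @` B `&` g @^-1` (U `&` B)) a.1 by split; [exists a|rewrite /preimage/= gf].
    by rewrite e.
by apply: bigcup_open => V [].
Qed.

Lemma et_bis a U : OR U -> U a -> exists2 B, OR B &
  [/\ B a, B `<=` U & forall x y, B x -> B y -> x.1 = y.1 -> x = y].
Proof.
move=> OU Ua; have Ra := top_sub et_top OU Ua.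
have [_ lh] := et_lh; have [B [OB Ba _ [_ [g [_ gf _]]]]] := lh a Ra.
exists (U `&` B); [exact: top_I et_top OU OB|split; [by split|by move=> ? []|]].
by move=> x y [_ Bx] [_ By] e; rewrite -(gf x Bx) -(gf y By) e.
Qed.

Lemma et_snd_cont : continuous_on R OR setT open_X snd.
Proof.
apply: cont_ext (cont_comp et_swap_cont et_fst_cont).
by move=> [].
Qed.

Lemma et_multc {T0 : Type} (C : set T0) OC (f1 f2 : T0 -> X * X) :
  is_topology C OC -> continuous_on C OC R OR f1 -> continuous_on C OC R OR f2 ->
  (forall x, C x -> (f1 x).2 = (f2 x).1) ->
  continuous_on C OC R OR (fun x => ((f1 x).1, (f2 x).2)).
Proof.
move=> tC c1 c2 e.
have cp := cont_pair tC c1 c2 (P := fibprod R R) (fun x Cx => And3 (cont_img c1 Cx) (cont_img c2 Cx) (e x Cx)).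
exact: cont_ext (cont_comp cp et_mult).
Qed.

Lemma et_diag : OR [set p | p.1 = p.2].
Proof.
apply: (top_loc et_top) => a ea.
have Ra : R a by case: a ea => x y /= <-; exact: et_refl.
have [B OB [Ba _ Binj]] := et_bis (top_A et_top) Ra.
have dc : continuous_on R OR R OR (fun p => (p.1, p.1)).
  apply: cont_ext (et_multc et_top (cont_id et_top) et_swap_cont _) => //.
exists (B `&` (R `&` (fun p => (p.1, p.1)) @^-1` B)).
  exact: top_I et_top OB (cont_pre dc OB).
split.
- split=> //; split=> //; rewrite /preimage /=.
  by move: Ba; case: a ea {Ra} => x y /= ->.
- move=> p [Bp [Rp Bdp]].
  have := Binj _ _ Bdp Bp erefl; case: p {Bp Rp Bdp} => x y /= [] ->.
  by [].
Qed.

Lemma et_unit_cont : continuous_on setT open_X R OR (fun x => (x, x)).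
Proof.
apply: cont_loc (top_X X) _ _ => [x _|x V _ OV Vx]; first exact: et_refl.
exists (fst @` (V `&` [set p | p.1 = p.2])).
  exact/et_fst_open/(top_I et_top OV et_diag).
split; first by exists (x, x).
by move=> w [[y z] [Vyz /= eyz] <-]; move: Vyz; rewrite -eyz.
Qed.

End Etale.


Lemma fin_inter {T : Type} (A : set T) O (H : set (set T)) :
  is_topology A O -> finite_set H -> H `<=` O -> O (A `&` \bigcap_(U in H) U).
Proof.
move=> tO /finite_fsetP [s ->].
rewrite (_ : [set` s] = [set U | U \in enum_fset s]) //.
elim: (enum_fset s) => [|U l IH] Hl.
  suff -> : A `&` \bigcap_(U in [set U | U \in [::]]) U = A by exact: top_A tO.
  by apply/seteqP; split=> x; [case|move=> Ax; split=> // U].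
have OU : O U by apply: Hl => /=; rewrite in_cons eqxx.
have Ol : O (A `&` \bigcap_(V in [set V | V \in l]) V).
  by apply: IH => V Vl; apply: Hl => /=; rewrite in_cons Vl orbT.
suff -> : A `&` \bigcap_(V in [set V | V \in U :: l]) V =
          (A `&` \bigcap_(V in [set V | V \in l]) V) `&` U by exact: top_I tO Ol OU.
apply/seteqP; split=> x.
- move=> [Ax HH]; split; [split=> // V Vl|]; apply: HH => /=; rewrite in_cons ?Vl ?orbT ?eqxx //.
- move=> [[Ax HH] Ux]; split=> // V /=; rewrite in_cons => /orP [/eqP ->//|Vl]; exact: HH.
Qed.

Section Tube.
Context {T1 T2 : Type} (A1 : set T1) (O1 : set (set T1)) (A2 : set T2) (O2 : set (set T2)).
Hypotheses (t1 : is_topology A1 O1) (t2 : is_topology A2 O2)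
  (c1 : compact_in A1 O1 A1) (c2 : compact_in A2 O2 A2).

Lemma tube_step (WW : set (set (T1 * T2))) a : WW `<=` prod_top O1 O2 ->
  box A1 A2 `<=` \bigcup_(W in WW) W -> A1 a ->
  exists N, [/\ O1 N, N a & exists2 ZZ, finite_set ZZ /\ ZZ `<=` WW &
                                  box N A2 `<=` \bigcup_(Z in ZZ) Z].
Proof.
move=> WWO cov Aa.
pose VV := [set V | O2 V /\ exists UZ : set T1 * set (T1 * T2),
   [/\ O1 UZ.1, UZ.1 a, WW UZ.2 & box UZ.1 V `<=` UZ.2]].
have [H [fH HV] A2H] : exists2 H, finite_set H /\ H `<=` VV & A2 `<=` \bigcup_(V in H) V.
  apply: (c2.2).
  - by move=> V [].
  - move=> b Ab; have [Z WWZ Zab] := cov (a, b) (conj Aa Ab).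
    have [U [V [OU OV Ua Vb sZ]]] := WWO Z WWZ _ Zab.
    by exists V => //; split=> //; exists (U, Z).
pose ch V := pick (fun UZ : set T1 * set (T1 * T2) =>
   [/\ O1 UZ.1, UZ.1 a, WW UZ.2 & box UZ.1 V `<=` UZ.2]) (A1, set0).
have chP V : H V -> [/\ O1 (ch V).1, (ch V).1 a, WW (ch V).2 & box (ch V).1 V `<=` (ch V).2].
  move=> /HV [_ [UZ P]].
  by apply: (@pickP _ (fun UZ : set T1 * set (T1 * T2) =>
   [/\ O1 UZ.1, UZ.1 a, WW UZ.2 & box UZ.1 V `<=` UZ.2])); exists UZ.
exists (A1 `&` \bigcap_(U in (fun V => (ch V).1) @` H) U); split.
- apply: fin_inter t1 (finite_image _ fH) _.
  by move=> _ [V HV' <-]; case: (chP V HV').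
- by split=> // _ [V HV' <-]; case: (chP V HV').
- exists ((fun V => (ch V).2) @` H).
    split; first exact: finite_image.
    by move=> _ [V HV' <-]; case: (chP V HV').
  move=> [x b] [/= [Ax Ix] Ab]; have [V HV' Vb] := A2H b Ab.
  exists (ch V).2; first by exists V.
  case: (chP V HV') => _ _ _; apply; split=> //=.
  by apply: Ix; exists V.
Qed.

Lemma tube (WW : set (set (T1 * T2))) : WW `<=` prod_top O1 O2 ->
  box A1 A2 `<=` \bigcup_(W in WW) W ->
  exists2 ZZ, finite_set ZZ /\ ZZ `<=` WW & box A1 A2 `<=` \bigcup_(Z in ZZ) Z.
Proof.
move=> WWO cov.
pose NN := [set N | O1 N /\ exists2 ZZ, finite_set ZZ /\ ZZ `<=` WW &
                                  box N A2 `<=` \bigcup_(Z in ZZ) Z].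
have [M [fM MN] A1M] : exists2 M, finite_set M /\ M `<=` NN & A1 `<=` \bigcup_(N in M) N.
  apply: (c1.2); first by move=> N [].
  move=> a Aa; have [N [ON Na [ZZ fZZ sZZ]]] := tube_step WWO cov Aa.
  by exists N => //; split=> //; exists ZZ.
pose ch N := pick (fun ZZ => (finite_set ZZ /\ ZZ `<=` WW) /\
                                  box N A2 `<=` \bigcup_(Z in ZZ) Z) set0.
have chP N : M N -> (finite_set (ch N) /\ ch N `<=` WW) /\
                                  box N A2 `<=` \bigcup_(Z in ch N) Z.
  move=> /MN [_ [ZZ fZZ sZZ]].
  by apply: (@pickP _ (fun ZZ => (finite_set ZZ /\ ZZ `<=` WW) /\
                                  box N A2 `<=` \bigcup_(Z in ZZ) Z)); exists ZZ.
exists (\bigcup_(N in M) ch N); first split.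
- by apply: bigcup_finite => // N MN'; case: (chP N MN') => [[]].
- by move=> Z [N MN' chZ]; case: (chP N MN') => [[_ +] _]; apply.
- move=> [x b] [/= Ax Ab]; have [N MN' Nx] := A1M x Ax.
  case: (chP N MN') => _ /(_ (x, b) (conj Nx Ab)) [Z chZ Zxb].
  by exists Z => //; exists N.
Qed.

Lemma compact_closed_prod (P : set (T1 * T2)) : P `<=` box A1 A2 ->
  prod_top O1 O2 (box A1 A2 `\` P) ->
  compact_in P (subspace_top (prod_top O1 O2) P) P.
Proof.
move=> PA Pc; split=> // GG GGO cov.
pose WW := [set W | prod_top O1 O2 W /\
   (W `<=` ~` P \/ exists2 G, GG G & P `&` W `<=` G)].
have covW : box A1 A2 `<=` \bigcup_(W in WW) W.
  move=> p Ap; have [Pp|nPp] := pselect (P p).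
  - have [G GGG Gp] := cov p Pp; have [W0 OW0 eG] := GGO G GGG.
    exists W0; first by split=> //; right; exists G => //; rewrite eG setIC.
    by move: Gp; rewrite eG => -[].
  - exists (box A1 A2 `\` P) => //; split=> //; left; by move=> q [].
have [ZZ [fZZ ZW] covZ] := @tube WW (fun W (HW : WW W) => proj1 HW) covW.
pose ch Z := pick (fun G => GG G /\ P `&` Z `<=` G) set0.
exists [set G | GG G /\ (ch @` ZZ) G]; first split.
- by apply: (sub_finite_set _ (finite_image ch fZZ)) => G [].
- by move=> G [].
- move=> p Pp; have [Z ZZZ Zp] := covZ p (PA p Pp).
  have [_ [ZP|[G GGG sG]]] := ZW Z ZZZ; first by have := ZP p Zp.
  have [chG chs] : GG (ch Z) /\ P `&` Z `<=` ch Z.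
    by apply: (@pickP _ (fun G => GG G /\ P `&` Z `<=` G)); exists G.
  by exists (ch Z); [split=> //; exists Z|apply: chs].
Qed.

End Tube.


Section Main.
Context {X : topologicalType} (R : set (X * X)) (OR : set (set (X * X)))
  (S : set (X * X)) (OS : set (set (X * X))).
Hypotheses (eR : etale_eq_rel R OR) (eS : etale_eq_rel S OS).
Hypothesis RSd : R `&` S = [set p | p.1 = p.2].
Variables (h g : (X * X) * (X * X) -> (X * X) * (X * X)).
Hypotheses (hc : continuous_on (fibprod R S) (fibprod_top R OR S OS)
                 (fibprod S R) (fibprod_top S OS R OR) h)
  (gc : continuous_on (fibprod S R) (fibprod_top S OS R OR)
                 (fibprod R S) (fibprod_top R OR S OS) g)
  (gh : forall q, fibprod R S q -> g (h q) = q)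
  (hg : forall q, fibprod S R q -> h (g q) = q)
  (hr : forall q, fibprod R S q -> rng2 (h q) = rng2 q)
  (hs : forall q, fibprod R S q -> src2 (h q) = src2 q).

Local Notation FRS := (fibprod R S).
Local Notation FSR := (fibprod S R).
Local Notation TRS := (fibprod_top R OR S OS).
Local Notation TSR := (fibprod_top S OS R OR).
Local Notation J := (rs_map @` FRS).
Local Notation W := (img_top rs_map TRS).

Lemma tR : is_topology R OR. Proof. exact: (@et_top X R OR eR). Qed.
Lemma tS : is_topology S OS. Proof. exact: (@et_top X S OS eS). Qed.

Lemma trR x y z : R (x, y) -> R (y, z) -> R (x, z). Proof. exact: (@et_trans X R OR eR x y z). Qed.
Lemma trS x y z : S (x, y) -> S (y, z) -> S (x, z). Proof. exact: (@et_trans X S OS eS x y z). Qed.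
Lemma syR x y : R (x, y) -> R (y, x). Proof. exact: (@et_sym X R OR eR x y). Qed.
Lemma syS x y : S (x, y) -> S (y, x). Proof. exact: (@et_sym X S OS eS x y). Qed.
Lemma syR' p : R p -> R (swap p). Proof. by case: p => x y; exact: syR. Qed.
Lemma syS' p : S p -> S (swap p). Proof. by case: p => x y; exact: syS. Qed.
Lemma rfR x : R (x, x). Proof. exact: (@et_refl X R OR eR x). Qed.
Lemma rfS x : S (x, x). Proof. exact: (@et_refl X S OS eS x). Qed.

Lemma FRS_box : forall q, FRS q -> R q.1 /\ S q.2. Proof. by move=> q []. Qed.
Lemma FSR_box : forall q, FSR q -> S q.1 /\ R q.2. Proof. by move=> q []. Qed.

Lemma tF : is_topology FRS TRS.
Proof. by apply: top_subspace (top_prod tR tS) _ => q [? ? _]; split. Qed.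
Lemma tFSR : is_topology FSR TSR.
Proof. by apply: top_subspace (top_prod tS tR) _ => q [? ? _]; split. Qed.

Lemma gF q : FSR q -> FRS (g q). Proof. by case: gc => + _; apply. Qed.
Lemma gr q : FSR q -> rng2 (g q) = rng2 q.
Proof. by move=> Fq; rewrite -(hr (gF Fq)) hg. Qed.
Lemma gs q : FSR q -> src2 (g q) = src2 q.
Proof. by move=> Fq; rewrite -(hs (gF Fq)) hg. Qed.

Lemma rs_inj p q : FRS p -> FRS q -> rs_map p = rs_map q -> p = q.
Proof.
case: p => [[a b] [c d]] [/= Rab Scd ebc]; case: q => [[a' b'] [c' d']] [/= Rab' Scd' ebc'].
rewrite /rs_map /= => -[ea ed].
rewrite -ebc in Scd; rewrite -ebc' -ed in Scd'; rewrite -ea in Rab'; rewrite -ebc -ebc' -ea -ed.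
have Rbb : R (b, b') := trR (syR Rab) Rab'.
have Sbb : S (b, b') := trS Scd (syS Scd').
have : (R `&` S) (b, b') by split.
by rewrite RSd /= => ->.
Qed.

Lemma J_eqv : Defs.equivalence_rel J.
Proof.
split.
- move=> x; exists ((x, x), (x, x)) => //; split; [exact: rfR|exact: rfS|by []].
- move=> x z [[[a b] [c d]] [/= Rab Scd ebc] [<- <-]].
  have F' : FSR ((d, c), (b, a)) by split=> /=; [exact: syS|exact: syR|by []].
  exists (g ((d, c), (b, a))); first exact: gF.
  by rewrite /rs_map; have := gr F'; have := gs F'; rewrite /rng2 /src2 /= => -> ->.
- move=> x y z [[[a b] [c d]] [/= Rab Scd ebc] [ex ey]] [[[a' b'] [c' d']] [/= Rab' Scd' ebc'] [ey' ez]].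
  have F' : FSR ((c, d), (a', b')) by split=> //=; rewrite ey ey'.
  case: (g ((c, d), (a', b'))) (gF F') (gr F') (gs F') => [[u v] [w t]] [/= Ruv Swt evw].
  rewrite /rng2 /src2 /= => eu et.
  exists ((a, v), (w, d')); last by rewrite /rs_map /= ex ez.
  split=> //=.
  - by apply: trR Rab _; rewrite ebc -eu.
  - by apply: trS Swt _; rewrite et ebc'.
Qed.

Lemma J_eq : join_rel R S = J.
Proof.
apply/seteqP; split=> [[x z] Jxz|_ [[[a b] [c d]] [/= Rab Scd ebc] <-]].
- apply: Jxz; first exact: J_eqv.
  + move=> [u v] Rxy; exists ((u, v), (v, v)) => //; split=> //; exact: rfS.
  + move=> [u v] Sxy; exists ((u, u), (u, v)) => //; split=> //; exact: rfR.
- move=> E [_ _ Et] RE SE; rewrite /rs_map /=.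
  apply: (Et a b d); first exact: RE.
  by rewrite ebc; apply: SE.
Qed.

Lemma J_sub_R : R `<=` J.
Proof. by move=> [x y] Rxy; exists ((x, y), (y, y)) => //; split=> //; exact: rfS. Qed.
Lemma J_sub_S : S `<=` J.
Proof. by move=> [x y] Sxy; exists ((x, x), (x, y)) => //; split=> //; exact: rfR. Qed.

Lemma J_ctbl x : countable [set y | J (x, y)].
Proof.
have cR : countable [set y | R (x, y)] by case: eR => [[_ c]] *; exact: c.
apply: (sub_countable (subset_card_le _) (bigcup_countable (F := fun y => [set z | S (y, z)]) cR _)).
- move=> z [[[a b] [c d]] [/= Rab Scd ebc] [ea ed]].
  by exists b; [rewrite /= -ea|rewrite /= ebc -ed].
- by move=> y _; case: eS => [[_ c]] *; exact: c.
Qed.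

Definition psi (j : X * X) : (X * X) * (X * X) :=
  pick (fun q => FRS q /\ rs_map q = j) ((j.1, j.1), (j.1, j.2)).

Lemma psiP j : J j -> FRS (psi j) /\ rs_map (psi j) = j.
Proof. by move=> [q Fq qj]; apply: (@pickP _ (fun q => FRS q /\ rs_map q = j)); exists q. Qed.

Lemma psi_rs q : FRS q -> psi (rs_map q) = q.
Proof.
move=> Fq; have [Fp e] := psiP (ex_intro2 _ _ q Fq erefl).
exact: rs_inj Fp Fq e.
Qed.

Lemma rs_injF : forall x y, FRS x -> FRS y -> rs_map x = rs_map y -> x = y.
Proof. by move=> x y; apply: rs_inj. Qed.

Lemma tJ : is_topology J W. Proof. exact: top_img tF rs_injF. Qed.

Lemma psi_cont : continuous_on J W FRS TRS psi.
Proof.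
apply: (cont_outof tF rs_injF).
by apply: cont_ext (cont_id tF) => q Fq /=; rewrite psi_rs.
Qed.

Lemma rs_cont : continuous_on FRS TRS J W rs_map.
Proof. exact: (cont_into tF rs_injF (cont_id tF)). Qed.

Lemma cF1 : continuous_on FRS TRS R OR fst.
Proof. by apply: cont_pfst tS _ => q []. Qed.
Lemma cF2 : continuous_on FRS TRS S OS snd.
Proof. by apply: cont_psnd tR _ => q []. Qed.
Lemma cG1 : continuous_on FSR TSR S OS fst.
Proof. by apply: cont_pfst tR _ => q []. Qed.
Lemma cG2 : continuous_on FSR TSR R OR snd.
Proof. by apply: cont_psnd tS _ => q []. Qed.

Lemma psi_parts j : J j -> [/\ FRS (psi j), (psi j).1.1 = j.1 & (psi j).2.2 = j.2].
Proof. by move=> /psiP [Fp e]; split=> //; [exact: (congr1 fst e)|exact: (congr1 snd e)]. Qed.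

Local Notation C := (fibprod J J).
Local Notation TC := (fibprod_top J W J W).

Lemma tC : is_topology C TC.
Proof. by apply: top_subspace (top_prod tJ tJ) _ => q [? ? _]; split. Qed.
Lemma cC1 : continuous_on C TC J W fst. Proof. by apply: cont_pfst tJ _ => q []. Qed.
Lemma cC2 : continuous_on C TC J W snd. Proof. by apply: cont_psnd tJ _ => q []. Qed.

Lemma cpa : continuous_on C TC FRS TRS (fun q => psi q.1).
Proof. exact: cont_ext (cont_comp cC1 psi_cont). Qed.
Lemma cpb : continuous_on C TC FRS TRS (fun q => psi q.2).
Proof. exact: cont_ext (cont_comp cC2 psi_cont). Qed.

Lemma J_mult : continuous_on C TC J W rs_map.
Proof.
have Pa q : C q -> [/\ FRS (psi q.1), (psi q.1).1.1 = q.1.1 & (psi q.1).2.2 = q.1.2].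
  by case=> /psi_parts.
have Pb q : C q -> [/\ FRS (psi q.2), (psi q.2).1.1 = q.2.1 & (psi q.2).2.2 = q.2.2].
  by case=> _ /psi_parts.
have a1 : continuous_on C TC R OR (fun q => (psi q.1).1) := cont_ext (fun _ _ => erefl) (cont_comp cpa cF1).
have a2 : continuous_on C TC S OS (fun q => (psi q.1).2) := cont_ext (fun _ _ => erefl) (cont_comp cpa cF2).
have b1 : continuous_on C TC R OR (fun q => (psi q.2).1) := cont_ext (fun _ _ => erefl) (cont_comp cpb cF1).
have b2 : continuous_on C TC S OS (fun q => (psi q.2).2) := cont_ext (fun _ _ => erefl) (cont_comp cpb cF2).
pose p1 q := ((psi q.1).2, (psi q.2).1).
have Fp1 q : C q -> FSR (p1 q).
  move=> Cq; have [[Ra Sa ea] _ ea2] := Pa q Cq; have [[Rb Sb eb] eb1 _] := Pb q Cq.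
  by split=> //=; rewrite ea2 eb1; case: Cq.
have cp1 : continuous_on C TC FSR TSR p1 := cont_pair tC a2 b1 Fp1.
have cg : continuous_on C TC FRS TRS (fun q => g (p1 q)) := cont_ext (fun _ _ => erefl) (cont_comp cp1 gc).
have c1 : continuous_on C TC R OR (fun q => (g (p1 q)).1) := cont_ext (fun _ _ => erefl) (cont_comp cg cF1).
have c2 : continuous_on C TC S OS (fun q => (g (p1 q)).2) := cont_ext (fun _ _ => erefl) (cont_comp cg cF2).
have m1 := @et_multc X R OR eR _ C TC _ _ tC a1 c1.
have m2 := @et_multc X S OS eS _ C TC _ _ tC c2 b2.
have e1 : forall q, C q -> (psi q.1).1.2 = (g (p1 q)).1.1.
  move=> q Cq; have := gr (Fp1 q Cq); rewrite /rng2 => ->.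
  by have [[]] := Pa q Cq.
have e2 : forall q, C q -> (g (p1 q)).2.2 = (psi q.2).2.1.
  move=> q Cq; have := gs (Fp1 q Cq); rewrite /src2 => ->.
  by have [[]] := Pb q Cq.
have FPhi : forall q, C q -> FRS (((psi q.1).1.1, (g (p1 q)).1.2), ((g (p1 q)).2.1, (psi q.2).2.2)).
  move=> q Cq; split=> /=.
  + by case: (m1 e1) => /(_ q Cq).
  + by case: (m2 e2) => /(_ q Cq).
  + by case: (gF (Fp1 q Cq)).
have Phi := cont_pair tC (m1 e1) (m2 e2) FPhi.
apply: cont_ext (cont_into tF rs_injF Phi) => q Cq /=; rewrite /rs_map /=.
by have [_ -> _] := Pa q Cq; have [_ _ ->] := Pb q Cq.
Qed.

Lemma J_swap : continuous_on J W J W swap.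
Proof.
have pc1 : continuous_on J W R OR (fun j => (psi j).1) := cont_ext (fun _ _ => erefl) (cont_comp psi_cont cF1).
have pc2 : continuous_on J W S OS (fun j => (psi j).2) := cont_ext (fun _ _ => erefl) (cont_comp psi_cont cF2).
have s1 : continuous_on J W R OR (fun j => swap (psi j).1) :=
  cont_ext (fun _ _ => erefl) (cont_comp pc1 (@et_swap_cont X R OR eR)).
have s2 : continuous_on J W S OS (fun j => swap (psi j).2) :=
  cont_ext (fun _ _ => erefl) (cont_comp pc2 (@et_swap_cont X S OS eS)).
have FP : forall j, J j -> FSR (swap (psi j).2, swap (psi j).1).
  move=> j Jj; have [[Ra Sb e] _ _] := psi_parts Jj.
  by split=> /=; [exact: syS'|exact: syR'|rewrite e].
have cp := cont_pair tJ s2 s1 FP.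
have cg : continuous_on J W FRS TRS (fun j => g (swap (psi j).2, swap (psi j).1)) :=
  cont_ext (fun _ _ => erefl) (cont_comp cp gc).
apply: cont_ext (cont_into tF rs_injF cg) => j Jj /=.
have [_ e1 e2] := psi_parts Jj.
rewrite /rs_map; have := gr (FP j Jj); have := gs (FP j Jj); rewrite /rng2 /src2 /= => -> ->.
by rewrite e1 e2.
Qed.

Lemma J_homeo : homeo_on J W J W (fun p => (p.2, p.1)).
Proof.
split; first exact: J_swap.
by exists swap; split=> //; [exact: J_swap|move=> [] |move=> []].
Qed.

Lemma J_fst_cont : continuous_on J W setT open_X fst.
Proof.
apply: (cont_outof tF rs_injF).
exact: cont_ext (fun _ _ => erefl) (cont_comp cF1 (@et_fst_cont X R OR eR)).
Qed.

Lemma F_fst_open U : TRS U -> open ((fun q => q.1.1) @` U).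
Proof.
move=> [W0 OW0 eU].
have -> : (fun q => q.1.1) @` U =
    \bigcup_(V in [set V : set X | open V /\ V `<=` (fun q => q.1.1) @` U]) V.
  apply/seteqP; split=> [_ [q Uq <-]|y [V [_ VU] Vy]]; last exact: VU.
  have [W0q Fq] : (W0 `&` FRS) q by rewrite -eU.
  have [U1 [U2 [OU1 OU2 U1q U2q sW]]] := OW0 q W0q.
  pose N' := U1 `&` (R `&` snd @^-1` (fst @` U2)).
  have ON' : OR N' := top_I tR OU1 (cont_pre (@et_snd_cont X R OR eR) (@et_fst_open X S OS eS U2 OU2)).
  exists (fst @` N'); first split.
  - exact: (@et_fst_open X R OR eR N' ON').
  - move=> _ [a [U1a [Ra [b U2b eb]]] <-].
    have Sb : S b := top_sub tS OU2 U2b.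
    have Fab : FRS (a, b) by split=> //=.
    exists (a, b) => //; rewrite eU; split=> //; by apply: sW.
  - exists q.1 => //; split=> //; split; first by case: Fq.
    by exists q.2 => //; case: Fq.
by apply: bigcup_open => V [].
Qed.

Lemma J_fst_open V : W V -> open (fst @` V).
Proof.
move=> [U OU ->]; suff -> : fst @` (rs_map @` U) = (fun q => q.1.1) @` U by exact: F_fst_open.
apply/seteqP; split=> [_ [_ [q Uq <-] <-]|_ [q Uq <-]]; by [exists q|exists (rs_map q) => //; exists q].
Qed.

Lemma J_locinj j : J j -> exists2 V, W V & V j /\ (forall x y, V x -> V y -> x.1 = y.1 -> x = y).
Proof.
move=> Jj; have [Fq eq] := psiP Jj.
have [B1 OB1 [B1q _ B1i]] := @et_bis X R OR eR (psi j).1 R (top_A tR) (FRS_box Fq).1.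
have [B2 OB2 [B2q _ B2i]] := @et_bis X S OS eS (psi j).2 S (top_A tS) (FRS_box Fq).2.
exists (rs_map @` (box B1 B2 `&` FRS)).
  exists (box B1 B2 `&` FRS) => //; exists (box B1 B2) => //; exact: prod_box.
split; first by exists (psi j).
move=> _ _ [p1 [[B1p1 B2p1] Fp1] <-] [p2 [[B1p2 B2p2] Fp2] <-] /= e.
have e1 : p1.1 = p2.1 by apply: B1i.
have e2 : p1.2 = p2.2.
  apply: B2i => //; case: Fp1 => _ _ <-; case: Fp2 => _ _ <-; by rewrite e1.
by rewrite (surjective_pairing p1) (surjective_pairing p2) e1 e2.
Qed.

Lemma J_lh : local_homeo_on J W setT open_X fst.
Proof. exact: lh_of tJ J_fst_cont J_fst_open J_locinj. Qed.

Lemma J_lc : compact [set: X] -> zero_dim X -> locally_compact_on J W.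
Proof. exact: lc_of tJ J_fst_cont J_fst_open J_locinj. Qed.

Lemma J_haus : hausdorff_on J W.
Proof.
apply: haus_img tF rs_injF _.
apply: haus_prod tR tS (@et_haus X R OR eR) (@et_haus X S OS eS).
by move=> q [].
Qed.

Lemma J_sc : second_countable_on W.
Proof. exact: sc_img (sc_prod _ (@et_sc X R OR eR) (@et_sc X S OS eS)). Qed.

Lemma J_etale : compact [set: X] -> zero_dim X -> etale_eq_rel J W.
Proof.
move=> cX zX; split.
- by split; [exact: J_eqv|move=> x; exact: J_ctbl].
- by split; [exact: tJ|split; [exact: J_haus|exact: J_lc|exact: J_sc]].
- exact: J_mult.
- exact: J_homeo.
- exact: J_lh.
Qed.

Definition iota (a : X * X) := (a, (a.2, a.2)).

Lemma iota_cont : continuous_on R OR FRS TRS iota.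
Proof.
have u : continuous_on R OR S OS (fun a => (a.2, a.2)) :=
  cont_ext (fun _ _ => erefl) (cont_comp (@et_snd_cont X R OR eR) (@et_unit_cont X S OS eS)).
apply: cont_ext (cont_pair tR (cont_id tR) u _) => // a Ra; split=> //; exact: rfS.
Qed.

Lemma F_R_iota q : FRS q -> R (rs_map q) -> q = iota (rs_map q).
Proof.
case: q => [[a b] [c d]] [/= Rab Scd ebc] Rad; rewrite /rs_map /iota /=.
rewrite -ebc in Scd; have Rbd := trR (syR Rab) Rad.
have : (R `&` S) (b, d) by split.
by rewrite RSd /= => ebd; rewrite -ebc -ebd.
Qed.

Lemma F_S_kappa q : FRS q -> S (rs_map q) -> q = ((q.1.1, q.1.1), rs_map q).
Proof.
case: q => [[a b] [c d]] [/= Rab Scd ebc] Sad; rewrite /rs_map /=.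
rewrite -ebc in Scd; have Sab := trS Sad (syS Scd).
have : (R `&` S) (a, b) by split.
by rewrite RSd /= => eab; rewrite -ebc -eab.
Qed.

Local Notation D := [set p : X * X | p.1 = p.2].

Lemma imR U : U `<=` R -> rs_map @` (box U D `&` FRS) = U.
Proof.
move=> UR; apply/seteqP; split=> [_ [q [[U1 D2] Fq] <-]|[x z] Uxz].
- by rewrite /rs_map -D2; case: Fq => _ _ <-; rewrite -surjective_pairing.
- exists (iota (x, z)) => //; split; first by split.
  by split=> //=; [exact: UR|exact: rfS].
Qed.

Lemma imS U : U `<=` S -> rs_map @` (box D U `&` FRS) = U.
Proof.
move=> US; apply/seteqP; split=> [_ [q [[D1 U2] Fq] <-]|[x z] Uxz].
- by rewrite /rs_map D1; case: Fq => _ _ ->; rewrite -surjective_pairing.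
- exists ((x, x), (x, z)) => //; split; first by split.
  by split=> //=; [exact: rfR|exact: US].
Qed.

Lemma W_R : W R.
Proof.
exists (box R D `&` FRS); last by rewrite imR.
exists (box R D) => //; exact: prod_box (top_A tR) (@et_diag X S OS eS).
Qed.

Lemma W_S : W S.
Proof.
exists (box D S `&` FRS); last by rewrite imS.
exists (box D S) => //; exact: prod_box (@et_diag X R OR eR) (top_A tS).
Qed.

Lemma sub_R : subspace_top W R = OR.
Proof.
apply/seteqP; split=> U.
- move=> [V [U0 OU0 ->] ->].
  have -> : rs_map @` U0 `&` R = R `&` iota @^-1` U0.
    apply/seteqP; split=> [_ [[q U0q <-] Rq]|[x z] [Rxz U0i]].
    + split=> //; rewrite /preimage /=.
      by rewrite -(F_R_iota (top_sub tF OU0 U0q) Rq).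
    + by split=> //; exists (iota (x, z)).
  exact: cont_pre iota_cont OU0.
- move=> OU; have UR := top_sub tR OU.
  exists (rs_map @` (box U D `&` FRS)).
    exists (box U D `&` FRS) => //; exists (box U D) => //.
    exact: prod_box OU (@et_diag X S OS eS).
  by rewrite imR // setIidl.
Qed.

Lemma sub_S : subspace_top W S = OS.
Proof.
have kc : continuous_on S OS FRS TRS (fun b => ((b.1, b.1), b)).
  have u : continuous_on S OS R OR (fun b => (b.1, b.1)) :=
    cont_ext (fun _ _ => erefl) (cont_comp (@et_fst_cont X S OS eS) (@et_unit_cont X R OR eR)).
  apply: cont_pair tS u (cont_id tS) _ => b Sb; split=> //; exact: rfR.
apply/seteqP; split=> U.
- move=> [V [U0 OU0 ->] ->].
  have -> : rs_map @` U0 `&` S = S `&` (fun b => ((b.1, b.1), b)) @^-1` U0.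
    apply/seteqP; split=> [_ [[q U0q <-] Sq]|[x z] [Sxz U0i]].
    + split=> //; rewrite /preimage /=.
      by rewrite -(F_S_kappa (top_sub tF OU0 U0q) Sq).
    + by split=> //; exists ((x, x), (x, z)).
  exact: cont_pre kc OU0.
- move=> OU; have US := top_sub tS OU.
  exists (rs_map @` (box D U `&` FRS)).
    exists (box D U `&` FRS) => //; exists (box D U) => //.
    exact: prod_box (@et_diag X R OR eR) OU.
  by rewrite imS // setIidl.
Qed.

Lemma uniq_top O : etale_eq_rel J O -> subspace_top O R = OR ->
  subspace_top O S = OS -> O = W.
Proof.
move=> eO sR sS.
have tO : is_topology J O := @et_top X J O eO.
have OW : O `<=` W.
  move=> V OV; apply/(img_topE tF rs_injF); split; first exact: top_sub tO OV.
  have [Wp OWp eM] := cont_pre (@et_mult X J O eO) OV.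
  exists (Wp `&` box R S).
  - move=> p [Wpp [Rp Sp]]; have [U [V' [OU OV' Up Vp sW]]] := OWp p Wpp.
    exists (U `&` R), (V' `&` S); split.
    + by rewrite -sR; exists U.
    + by rewrite -sS; exists V'.
    + by split.
    + by split.
    + by move=> r [[? ?] [? ?]]; split; [apply: sW|split].
  - have CF q : FRS q -> fibprod J J q.
      by case=> ? ? ?; split=> //; [exact: J_sub_R|exact: J_sub_S].
    apply/seteqP; split=> q.
    + move=> [Fq Vq]; have : (fibprod J J `&` rs_map @^-1` V) q by split=> //; exact: CF.
      rewrite eM => -[Wpq _]; split=> //; split=> //; by case: Fq.
    + move=> [[Wpq [Rq Sq]] Fq]; split=> //.
      have : (Wp `&` fibprod J J) q by split=> //; exact: CF.
      by rewrite -eM => -[].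
have WO : W `<=` O.
  move=> V WV; apply: (top_loc tO) => j Vj.
  have Jj : J j := top_sub tJ WV Vj.
  have [B OB [Bj _ Binj]] := @et_bis X J O eO j J (top_A tO) Jj.
  have WB := OW B OB.
  have oI : open (fst @` (V `&` B)) := J_fst_open (top_I tJ WV WB).
  exists (B `&` (J `&` fst @^-1` (fst @` (V `&` B)))).
    exact: top_I tO OB (cont_pre (@et_fst_cont X J O eO) oI).
  split; first by split=> //; split=> //; exists j.
  move=> b [Bb [Jb [c [Vc Bc] ec]]].
  by rewrite (Binj b c Bb Bc (esym ec)).
by apply/seteqP; split.
Qed.

Lemma F_closed : hausdorff_space X -> prod_top OR OS (box R S `\` FRS).
Proof.
move=> hX p [[Rp Sp] nF].
have ne : p.1.2 != p.2.1 by apply/eqP => e; apply: nF; split.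
move: hX; rewrite open_hausdorff => /(_ _ _ ne) [[U V] /= [Ux Vy] [oU oV /eqP UV]].
rewrite !in_setE in Ux Vy.
exists (R `&` snd @^-1` U), (S `&` fst @^-1` V); split.
- exact: cont_pre (@et_snd_cont X R OR eR) oU.
- exact: cont_pre (@et_fst_cont X S OS eS) oV.
- by split.
- by split.
- move=> q [[Rq Uq] [Sq Vq]]; split; first by split.
  move=> [_ _ e]; have : (U `&` V) q.1.2 by split=> //; rewrite e.
  by rewrite UV.
Qed.

Lemma J_compact : hausdorff_space X -> compact_in R OR R -> compact_in S OS S ->
  compact_in J W J.
Proof.
move=> hX cR cS.
have cF : compact_in FRS TRS FRS.
  have := @compact_closed_prod _ _ R OR S OS tR cR cS FRS _ (F_closed hX); apply.
  by move=> q [? ? _]; split.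
exact: compact_img rs_cont cF.
Qed.

Lemma main_all : compact [set: X] -> hausdorff_space X -> zero_dim X ->
  [/\ etale_eq_rel J W,
      (CEER R OR -> CEER S OS -> CEER J W),
      subspace_top W R = OR /\ subspace_top W S = OS,
      (forall O, etale_eq_rel J O -> subspace_top O R = OR ->
         subspace_top O S = OS -> O = W) &
      W R /\ W S].
Proof.
move=> cX hX zX; split.
- exact: J_etale.
- move=> [_ cR] [_ cS]; split; [exact: J_etale|exact: J_compact].
- by split; [exact: sub_R|exact: sub_S].
- exact: uniq_top.
- by split; [exact: W_R|exact: W_S].
Qed.

End Main.


Unset Implicit Arguments.
Theorem proposition3p3 (X : topologicalType)
    (R : set (X * X)) (OR : set (set (X * X)))
    (S : set (X * X)) (OS : set (set (X * X))) :
  compact [set: X] -> hausdorff_space X -> metrizable X -> zero_dim X ->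
  etale_eq_rel R OR -> etale_eq_rel S OS -> transverse R OR S OS ->
  [/\ etale_eq_rel (join_rel R S) (join_top R OR S OS),
      (CEER R OR -> CEER S OS -> CEER (join_rel R S) (join_top R OR S OS)),
      subspace_top (join_top R OR S OS) R = OR /\
      subspace_top (join_top R OR S OS) S = OS,
      (forall O : set (set (X * X)),
          etale_eq_rel (join_rel R S) O ->
          subspace_top O R = OR -> subspace_top O S = OS ->
          O = join_top R OR S OS) &
      join_top R OR S OS R /\ join_top R OR S OS S].
Proof.
move=> cX hX _ zX eR eS [RSd [h [[_ [g [gc _ hg]]] hr hs]]].
rewrite (J_eq eR eS gc hg hr hs).
exact: (main_all eR eS RSd gc hg hr hs cX hX zX).
Qed.
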